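(* Let $A=(a_{ij})\in\mathcal{B}^{m,n}$ and let $k$ be a field. Let $k[A]=k[x_{ij} : a_{ij}=1]$ and let $A[x]$ be the $m\times n$ matrix over $k[A]$ with $A[x]_{ij}=x_{ij}$ if $a_{ij}=1$ and $0$ otherwise. For $t\geq 1$ let $I_t(A[x])\subseteq k[A]$ be the ideal generated by all $t\times t$ minors of $A[x]$. If for some integer $s\geq 2$ the monomial $x_{i_1j_1}\cdots x_{i_sj_s}$ (a product of variables of $k[A]$) lies in $I_s(A[x])$, then $\{a_{i_kj_k} : 1\leq k\leq s\}$ is an isolated set of $A$.
   Context: $\mathcal{B}^{m,n}$ denotes $m\times n$ matrices with entries in the Boolean semiring $\{0,1\}$ with $\vee$ (or), $\wedge$ (and). A pair of entries $\{a_{ij},a_{k\ell}\}$ is isolated if $a_{ij}=a_{k\ell}=1$ and $a_{i\ell}\wedge a_{kj}=0$. A subset $T$ of the entries of $A$ equal to $1$ is an isolated set if it has size one or every pair of its elements is isolated. *)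

(* Defs.v *)
From HB Require Import structures.
From mathcomp Require Import all_boot all_order all_algebra.
From mathcomp Require Import mpoly.
Set Implicit Arguments. Unset Strict Implicit. Unset Printing Implicit Defensive.
Import GRing.Theory.
Local Open Scope ring_scope.

Definition isolated_pair m n (A : 'M[bool]_(m, n)) (p q : 'I_m * 'I_n) : bool :=
  [&& A p.1 p.2, A q.1 q.2 & ~~ (A p.1 q.2 && A q.1 p.2)].

Definition isolated_set m n (A : 'M[bool]_(m, n)) (T : {set 'I_m * 'I_n}) : Prop :=
  (forall p, p \in T -> A p.1 p.2) /\
  (#|T| = 1%N \/
   forall p q, p \in T -> q \in T -> p != q -> isolated_pair A p q).

(* The positions where a_ij = 1: these index the variables of k[A]. *)
Definition supp m n (A : 'M[bool]_(m, n)) := {p : 'I_m * 'I_n | A p.1 p.2}.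

Definition kA (k : fieldType) m n (A : 'M[bool]_(m, n)) :=
  {mpoly k[#|{: supp A}|]}.

Definition xvar (k : fieldType) m n (A : 'M[bool]_(m, n)) (p : supp A) : kA k A :=
  'X_(enum_rank p).

Definition Ax (k : fieldType) m n (A : 'M[bool]_(m, n)) : 'M[kA k A]_(m, n) :=
  \matrix_(i, j)
    match @insub _ (fun p : 'I_m * 'I_n => A p.1 p.2) (supp A) (i, j) with
    | Some p => xvar k p
    | None => 0
    end.

Definition minor (R : comNzRingType) m n t (M : 'M[R]_(m, n))
  (r : {ffun 'I_t -> 'I_m}) (c : {ffun 'I_t -> 'I_n}) : R :=
  \det (\matrix_(i, j) M (r i) (c j)).

(* f lies in I_t(M), the ideal generated by all t x t minors of M
   (minors taken over injective row/column selections; these are, up to sign,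
   exactly the minors with increasing row and column indices). *)
Definition in_minor_ideal (R : comNzRingType) m n t (M : 'M[R]_(m, n)) (f : R) : Prop :=
  exists cf : {ffun 'I_t -> 'I_m} * {ffun 'I_t -> 'I_n} -> R,
    f = \sum_(rc : {ffun 'I_t -> 'I_m} * {ffun 'I_t -> 'I_n} | injectiveb rc.1 && injectiveb rc.2) cf rc * minor M rc.1 rc.2.

(* Main.v *)
Require Import Defs.
From HB Require Import structures.
From mathcomp Require Import all_boot all_order all_algebra.
From mathcomp Require Import mpoly.
Set Implicit Arguments. Unset Strict Implicit. Unset Printing Implicit Defensive.
Import GRing.Theory.
Local Open Scope ring_scope.

Lemma key (k : fieldType) (m n : nat) (A : 'M[bool]_(m, n))
  (s : nat) (e : 'I_s -> 'I_m * 'I_n) (S : {set 'I_m * 'I_n})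
  (hS : forall x, x \in S -> A x.1 x.2) (heS : forall l, e l \in S)
  (hdet : forall (r : {ffun 'I_s -> 'I_m}) (c : {ffun 'I_s -> 'I_n}),
      injectiveb r -> injectiveb c ->
      \det (\matrix_(i, j) (((r i, c j) \in S)%:R : k)) = 0)
  (hmem : in_minor_ideal s (Ax k A) (\prod_(l < s) Ax k A (e l).1 (e l).2)) :
  False.
Proof.
pose v := fun i : 'I_#|{: supp A}| => (((val (enum_val i)) \in S)%:R : k).
have hev : forall i j, (Ax k A i j).@[v] = ((i, j) \in S)%:R.
  move=> i j; rewrite /Ax mxE; case: insubP => [p Ap <-| nA].
    by rewrite /xvar mevalXU /v enum_rankK.
  rewrite meval0; case hin: ((i, j) \in S) => //.
  by move: (hS _ hin); rewrite (negbTE nA).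
case: hmem => cf hcf.
have := congr1 (meval v) hcf.
rewrite rmorph_prod /= (eq_bigr (fun _ => 1)); last first.
  by move=> l _; rewrite hev -surjective_pairing heS.
rewrite big1_eq raddf_sum /= big1 ?oner_eq0 //.
  by move=> /eqP; rewrite oner_eq0.
case=> r c /= /andP [ir ic]; rewrite mevalM /minor -det_map_mx.
have -> : map_mx (meval v) (\matrix_(i, j) Ax k A (r i) (c j)) =
          \matrix_(i, j) (((r i, c j) \in S)%:R : k).
  by apply/matrixP => i j; move: (hev (r i) (c j)); rewrite /Ax !mxE.
by rewrite hdet // mulr0.
Qed.

Lemma det_row0' (R : comNzRingType) s (M : 'M[R]_s) i0 :
  (forall j, M i0 j = 0) -> \det M = 0.
Proof. by move=> h; rewrite (expand_det_row M i0) big1 // => j _; rewrite h mul0r. Qed.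

Lemma det_col0' (R : comNzRingType) s (M : 'M[R]_s) j0 :
  (forall i, M i j0 = 0) -> \det M = 0.
Proof. by move=> h; rewrite -det_tr (@det_row0' _ _ _ j0) // => j; rewrite mxE h. Qed.

Lemma small_image (T : finType) s (f : 'I_s -> T) (g : 'I_s -> T) t t' :
  t != t' -> f t = f t' -> injective g -> exists i0, g i0 \notin f @: [set: 'I_s].
Proof.
move=> ntt ftt ig.
case: (boolP [exists i, g i \notin f @: [set: 'I_s]]) => [/existsP [i0 hi0] | hno].
  by exists i0.
exfalso.
have hsub : g @: [set: 'I_s] \subset f @: [set: 'I_s].
  apply/subsetP => _ /imsetP [i _ ->].
  by move: hno; rewrite negb_exists => /forallP /(_ i); rewrite negbK.
have c1 : #|g @: [set: 'I_s]| = s by rewrite card_imset // cardsT card_ord.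
have c2 : (#|f @: [set: 'I_s]| < s)%N.
  rewrite ltn_neqAle; apply/andP; split.
    apply/negP => /eqP h.
    have : #|f @: [set: 'I_s]| == #|[set: 'I_s]| by rewrite h cardsT card_ord.
    move/imset_injP => finj.
    by move: ntt; rewrite (finj t t') ?inE ?eqxx.
  by apply: leq_trans (leq_imset_card _ _) _; rewrite cardsT card_ord.
by move: (subset_leq_card hsub); rewrite c1 leqNgt c2.
Qed.

Lemma rows_inj (k : fieldType) (m n : nat) (A : 'M[bool]_(m, n))
  (s : nat) (e : 'I_s -> 'I_m * 'I_n)
  (he : forall l, A (e l).1 (e l).2)
  (hmem : in_minor_ideal s (Ax k A) (\prod_(l < s) Ax k A (e l).1 (e l).2)) :
  forall t t', (e t).1 = (e t').1 -> t = t'.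
Proof.
move=> t t' ht; apply/eqP/negPn/negP => ntt.
apply: (@key k m n A s e [set x | [exists l, e l == x]]) hmem.
- by move=> x; rewrite inE => /existsP [l /eqP <-].
- by move=> l; rewrite inE; apply/existsP; exists l.
move=> r c /injectiveP ir _.
have [i0 hi0] := @small_image _ s (fun l => (e l).1) r t t' ntt ht ir.
apply: (@det_row0' _ _ _ i0) => j; rewrite mxE inE.
case: existsP => [[l /eqP hl]|] //.
exfalso; move/negP: hi0; apply; apply/imsetP; exists l => //; by rewrite hl.
Qed.

Lemma cols_inj (k : fieldType) (m n : nat) (A : 'M[bool]_(m, n))
  (s : nat) (e : 'I_s -> 'I_m * 'I_n)
  (he : forall l, A (e l).1 (e l).2)
  (hmem : in_minor_ideal s (Ax k A) (\prod_(l < s) Ax k A (e l).1 (e l).2)) :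
  forall t t', (e t).2 = (e t').2 -> t = t'.
Proof.
move=> t t' ht; apply/eqP/negPn/negP => ntt.
apply: (@key k m n A s e [set x | [exists l, e l == x]]) hmem.
- by move=> x; rewrite inE => /existsP [l /eqP <-].
- by move=> l; rewrite inE; apply/existsP; exists l.
move=> r c _ /injectiveP ic.
have [j0 hj0] := @small_image _ s (fun l => (e l).2) c t t' ntt ht ic.
apply: (@det_col0' _ _ _ j0) => i; rewrite mxE inE.
case: existsP => [[l /eqP hl]|] //.
exfalso; move/negP: hj0; apply; apply/imsetP; exists l => //; by rewrite hl.
Qed.

Lemma bmul (R : comNzRingType) (x y : bool) : (x%:R * y%:R : R) = (x && y)%:R.
Proof. by case: x; case: y; rewrite ?mulr1 ?mulr0. Qed.

Lemma entry_sum (k : fieldType) m n s (e : 'I_s -> 'I_m * 'I_n) (l1 l2 : 'I_s)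
  (hrow : forall t t', (e t).1 = (e t').1 -> t = t')
  (l12 : l1 != l2) (a : 'I_m) (b : 'I_n) :
  let blk := ((a == (e l1).1) || (a == (e l2).1)) && ((b == (e l1).2) || (b == (e l2).2)) in
  \sum_(t < s)
     ((if t == l2 then 0 else if t == l1 then ((a == (e l1).1) || (a == (e l2).1))%:R
       else (a == (e t).1)%:R) *
      (if t == l1 then ((b == (e l1).2) || (b == (e l2).2))%:R else (b == (e t).2)%:R) : k)
  = (([exists l, e l == (a, b)] || blk) : bool)%:R.
Proof.
move=> blk.
have einj : injective e by move=> t t' h; apply: hrow; rewrite h.
have l21 : (l2 == l1) = false by apply/negbTE; rewrite eq_sym.
have term : forall t, t != l1 ->
    ((if t == l1 then ((a == (e l1).1) || (a == (e l2).1))%:R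
       else (a == (e t).1)%:R) *
      (if t == l1 then ((b == (e l1).2) || (b == (e l2).2))%:R else (b == (e t).2)%:R) : k)
    = (e t == (a, b))%:R.
  move=> t h1; rewrite (negbTE h1) bmul.
  by case: (e t) => x y /=; rewrite xpair_eqE eq_sym (eq_sym b).
have term2 : forall t,
    ((a == (e t).1)%:R * (b == (e t).2)%:R : k) = (e t == (a, b))%:R.
  move=> t; rewrite bmul.
  by case: (e t) => x y /=; rewrite xpair_eqE eq_sym (eq_sym b).
case hb: blk.
  rewrite orbT (bigD1 l1) //= (negbTE l12) eqxx bmul -/blk hb.
  rewrite big1 ?addr0 // => t tl1.
  case: (eqVneq t l2) => [->|tl2]; first by rewrite ?eqxx mul0r.
  rewrite term //; case: eqP => // het; exfalso.
  move: hb; rewrite /blk => /andP [/orP [] /eqP ha _].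
    by move: tl1; rewrite (hrow t l1) ?eqxx // het.
  by move: tl2; rewrite (hrow t l2) ?eqxx // het.
case: existsP => [[l0 /eqP hl0] | hno] /=.
  have h01 : l0 != l1.
    apply/negP => /eqP h; move: hb; rewrite /blk -h hl0 /= !eqxx //.
  have h02 : l0 != l2.
    apply/negP => /eqP h; move: hb; rewrite /blk -h hl0 /= !eqxx !orbT //.
  rewrite (bigD1 l0) //= (negbTE h02) term // hl0 eqxx big1 ?addr0 // => t tl0.
  case: (eqVneq t l2) => [->|tl2]; first by rewrite ?eqxx mul0r.
  case: (eqVneq t l1) => [_|tl1].
    by rewrite ?eqxx bmul -/blk hb.
  rewrite term2; case: eqP => // het; exfalso.
  by move: tl0; rewrite (einj t l0) ?eqxx // het.
rewrite big1 // => t _.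
case: (eqVneq t l2) => [->|tl2]; first by rewrite ?eqxx mul0r.
case: (eqVneq t l1) => [_|tl1].
  by rewrite ?eqxx bmul -/blk hb.
rewrite term2; case: eqP => // het; exfalso; apply: hno; exists t; exact/eqP.
Qed.

Unset Implicit Arguments.

Theorem theorem4p13 (k : fieldType) (m n : nat) (A : 'M[bool]_(m, n))
  (s : nat) (hs : (2 <= s)%N) (e : 'I_s -> 'I_m * 'I_n)
  (he : forall l, A (e l).1 (e l).2)
  (hmem : in_minor_ideal s (Ax k A) (\prod_(l < s) Ax k A (e l).1 (e l).2)) :
  isolated_set A [set e l | l : 'I_s].
Proof.
have hrow := rows_inj he hmem.
split; first by move=> x /imsetP [l _ ->].
right => x y /imsetP [l1 _ ->] /imsetP [l2 _ ->] hne.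
rewrite /isolated_pair !he /=; apply/negP => /andP [h1 h2].
have l12 : l1 != l2 by apply: contraNneq hne => ->.
pose blk (x : 'I_m * 'I_n) := ((x.1 == (e l1).1) || (x.1 == (e l2).1)) &&
                             ((x.2 == (e l1).2) || (x.2 == (e l2).2)).
apply: (@key k m n A s e [set x | [exists l, e l == x] || blk x]) hmem.
- move=> [a b]; rewrite inE => /orP [/existsP [l /eqP <-] //|].
  rewrite /blk /= => /andP [/orP [] /eqP -> /orP [] /eqP ->] //.
- by move=> l; rewrite inE; apply/orP; left; apply/existsP; exists l.
move=> r c _ _.
pose U : 'M[k]_s := \matrix_(i, t) (if t == l2 then 0 else if t == l1 then
   ((r i == (e l1).1) || (r i == (e l2).1))%:R else (r i == (e t).1)%:R).
pose W : 'M[k]_s := \matrix_(t, j) (if t == l1 then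
   ((c j == (e l1).2) || (c j == (e l2).2))%:R else (c j == (e t).2)%:R).
have -> : \matrix_(i, j) ((((r i, c j) \in [set x | [exists l, e l == x] || blk x]))%:R : k)
   = U *m W.
  apply/matrixP => i j; rewrite !mxE inE.
  rewrite -(entry_sum k hrow l12 (r i) (c j)).
  by apply: eq_bigr => t _; rewrite !mxE.
rewrite det_mulmx (@det_col0' _ _ U l2) ?mul0r // => i.
by rewrite mxE eqxx.
Qed.
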